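(* For all $p,q\in\mathbb Z$, $r,s\ge0$ and $2\le n\le\infty$, the $n$-multicomplex $\mathcal ZW^n_s(p,q)$ is cofibrant in the $r$-model structure on $\mathrm{Ch}_n$; that is, for every morphism $f\colon A\to B$ of $n$-multicomplexes that is an $E_r$-quasi-isomorphism with $E_i(f)$ bidegree-wise surjective for all $0\le i\le r$, every morphism $\mathcal ZW^n_s(p,q)\to B$ lifts through $f$.
   Context: $R$ is a commutative unital ring. For $1\le n\le\infty$, an $n$-multicomplex is a $\mathbb Z\times\mathbb Z$-bigraded $R$-module $A$ with $R$-linear maps $d_i$ ($i\ge0$) of bidegree $(-i,1-i)$ such that $\sum_{i+j=l}(-1)^id_id_j=0$ for all $l\ge0$ and $d_i=0$ for $i\ge n$; morphisms are bidegree $(0,0)$ maps commuting with all $d_i$; category $\mathrm{Ch}_n$. Spectral sequence: $Z_0^{p,q}(A)=A^{p,q}$; for $r\ge1$, $Z_r^{p,q}(A)$ is the set of $a_0\in A^{p,q}$ for which there exist $a_j\in A^{p-j,q-j}$ ($1\le j\le r-1$) with $\sum_{i+j=l}(-1)^id_ia_j=0$ for $0\le l\le r-1$. $B_0=0$, $B_1^{p,q}(A)=A^{p,q}\cap\operatorname{im}d_0$, and for $r\ge2$, $B_r^{p,q}(A)$ is the set of $x\in A^{p,q}$ for which there exist $b_i\in A^{p+r-1-i,q+r-2-i}$ ($0\le i\le r-1$) with $x=\sum_{i=0}^{r-1}(-1)^id_ib_{r-1-i}$ and $\sum_{i=0}^l(-1)^id_ib_{l-i}=0$ for $0\le l\le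 r-2$. $E_r^{p,q}(A)=Z_r^{p,q}(A)/B_r^{p,q}(A)$, the spectral sequence of the column-filtered total complex; $f$ is an $E_r$-quasi-isomorphism if $E_{r+1}(f)$ is an isomorphism. The $r$-model structure on $\mathrm{Ch}_n$ ($2\le n\le\infty$) has weak equivalences the $E_r$-quasi-isomorphisms and fibrations the morphisms $f$ with $E_i(f)$ bidegree-wise surjective for $0\le i\le r$. $\mathbb D^n(p,q)$ is the free $n$-multicomplex on one generator in bidegree $(p,q)$. $\mathcal ZW^n_0(p,q)=\mathbb D^n(p,q)$; for $s\ge1$, $\mathcal ZW^n_s(p,q)$ is the $n$-multicomplex generated by $a_0,\dots,a_{s-1}$, $a_i$ in bidegree $(p-i,q-i)$, subject to the relations $\sum_{i+j=l}(-1)^id_ia_j=0$ for $0\le l\le s-1$ (equivalently the iterated pushout construction of the paper). *)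

(* Defs.v *)
From HB Require Import structures.
From mathcomp Require Import all_boot all_order all_algebra.
Unset Implicit Arguments.
Import Order.TTheory GRing.Theory Num.Theory.
Local Open Scope ring_scope.

(* n in {1,2,...} u {oo}: Some m = finite m, None = infinity.
   below n i  <->  i < n. *)
Definition below (n : option nat) (i : nat) : bool :=
  if n is Some m then (i < m)%N else true.

(* Only used where the two bidegrees are
   provably equal; it avoids dependent casts along integer identities. *)
Definition tr {R : comPzRingType} {A : int -> int -> lmodType R} {p q : int}
    (p' q' : int) (x : A p q) : A p' q' :=
  match (p, q) =P (p', q') with
  | ReflectT e => eq_rect (p, q) (fun pq => A pq.1 pq.2) x (p', q') e
  | ReflectF _ => 0
  end.

Record mcx (R : comPzRingType) (n : option nat) := Mcx {
  mc_obj :> int -> int -> lmodType R;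
  dmap : forall (i : nat) (p q : int),
      {linear mc_obj p q -> mc_obj (p - i%:Z) (q + 1 - i%:Z)};
  dmap_vanish : forall (i : nat) (p q : int) (x : mc_obj p q),
      ~~ below n i -> dmap i p q x = 0;
  dmap_rel : forall (l : nat) (p q : int) (x : mc_obj p q),
      \sum_(j < l.+1)
         (-1) ^+ (l - j)%N *:
           tr (p - l%:Z) (q + 2 - l%:Z)
              (dmap (l - j)%N (p - (j : nat)%:Z) (q + 1 - (j : nat)%:Z)
                    (dmap j p q x)) = 0
}.
Arguments dmap {R n} m i p q.

Record mcmor (R : comPzRingType) (n : option nat) (A B : mcx R n) := Mcmor {
  fmap :> forall (p q : int), {linear A p q -> B p q};
  fmap_comm : forall (i : nat) (p q : int) (x : A p q),
      fmap _ _ (dmap A i p q x) = dmap B i p q (fmap p q x)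
}.
Arguments fmap {R n A B} m p q.

Section MC.
Variables (R : comPzRingType) (n : option nat).

Definition cycrel (A : mcx R n) (s : nat) (p q : int)
    (a : forall j : nat, A (p - j%:Z) (q - j%:Z)) : Prop :=
  forall l : nat, (l < s)%N ->
    \sum_(j < l.+1)
       (-1) ^+ (l - j)%N *:
         tr (p - l%:Z) (q + 1 - l%:Z)
            (dmap A (l - j)%N (p - (j : nat)%:Z) (q - (j : nat)%:Z) (a j)) = 0.

(* Z_r^{p,q}(A): a_0 = x admits a_1..a_{r-1} satisfying the relations for
   0 <= l <= r-1 (for r = 0 this is all of A^{p,q}). *)
Definition Zr (A : mcx R n) (r : nat) (p q : int) (x : A p q) : Prop :=
  exists a : forall j : nat, A (p - j%:Z) (q - j%:Z),
    cycrel A r p q a /\ tr p q (a 0%N) = x.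

(* B_r^{p,q}(A): b_i in A^{p+r-1-i, q+r-2-i} (0 <= i <= r-1) with
   x = sum_{i=0}^{r-1} (-1)^i d_i b_{r-1-i} and
   sum_{i=0}^l (-1)^i d_i b_{l-i} = 0 for 0 <= l <= r-2.
   For r = 0 the formula gives {0}; for r = 1 it gives A^{p,q} n im d_0. *)
Definition Br (A : mcx R n) (r : nat) (p q : int) (x : A p q) : Prop :=
  exists b : forall k : nat, A (p + r%:Z - 1 - k%:Z) (q + r%:Z - 2 - k%:Z),
    x = \sum_(i < r)
          (-1) ^+ (i : nat) *:
            tr p q (dmap A i _ _ (b (r - 1 - i)%N))
    /\ forall l : nat, (l.+1 < r)%N ->
      \sum_(i < l.+1)
          (-1) ^+ (i : nat) *:
            tr (p + r%:Z - 1 - l%:Z) (q + r%:Z - 1 - l%:Z)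
               (dmap A i _ _ (b (l - i)%N)) = 0.

(* E_r(f) : Z_r/B_r -> Z_r/B_r (f preserves Z_r and B_r), unfolded:
   injective, resp. surjective, in every bidegree. *)
Definition E_inj (A B : mcx R n) (f : mcmor R n A B) (r : nat) : Prop :=
  forall (p q : int) (x : A p q),
    Zr A r p q x -> Br B r p q (f p q x) -> Br A r p q x.

Definition E_surj (A B : mcx R n) (f : mcmor R n A B) (r : nat) : Prop :=
  forall (p q : int) (y : B p q), Zr B r p q y ->
    exists x : A p q, Zr A r p q x /\ Br B r p q (f p q x - y).

Definition Er_qiso (A B : mcx R n) (f : mcmor R n A B) (r : nat) : Prop :=
  E_inj A B f r.+1 /\ E_surj A B f r.+1.

Definition r_fibration (A B : mcx R n) (f : mcmor R n A B) (r : nat) : Prop :=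
  forall i : nat, (i <= r)%N -> E_surj A B f i.

(* Morphisms ZW^n_s(p,q) -> B, by the defining presentation of ZW^n_s(p,q):
   generators a_j (0 <= j < max(s,1)) in bidegree (p-j,q-j), subject to the
   relations for 0 <= l <= s-1 (for s = 0: one free generator, i.e. D^n(p,q)).
   Such a morphism is the family g of images of the generators, subject to
   cycrel B s p q g; only the entries j < maxn s 1 are meaningful. *)
Definition ZW_hom (B : mcx R n) (s : nat) (p q : int)
    (g : forall j : nat, B (p - j%:Z) (q - j%:Z)) : Prop := cycrel B s p q g.

Definition lifts (A B : mcx R n) (f : mcmor R n A B) (s : nat) (p q : int)
    (h : forall j : nat, A (p - j%:Z) (q - j%:Z))
    (g : forall j : nat, B (p - j%:Z) (q - j%:Z)) : Prop :=
  forall j : nat, (j < maxn s 1)%N -> f _ _ (h j) = g j.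

End MC.

(* Main.v *)
Require Import Defs.
From HB Require Import structures.
From mathcomp Require Import all_boot all_order all_algebra.
From mathcomp Require Import zify.
Local Open Scope ring_scope.
Import GRing.Theory.
Set Implicit Arguments.

Section Tr.
Variables (R : comPzRingType) (A : int -> int -> lmodType R).

Lemma tr_id p q (x : A p q) : tr p q x = x.
Proof. by rewrite /tr; case: eqP => // e; rewrite (eq_irrelevance e (erefl _)). Qed.

Lemma tr_ne p q p' q' (x : A p q) : (p, q) <> (p', q') -> tr p' q' x = 0.
Proof. by rewrite /tr; case: eqP. Qed.

Lemma tr_tr1 p q c d a b (x : A p q) : (p, q) = (c, d) -> tr a b (tr c d x) = tr a b x.
Proof. by case=> <- <-; rewrite tr_id. Qed.

Lemma tr_tr2 p q c d a b (x : A p q) : (c, d) = (a, b) -> tr a b (tr c d x) = tr a b x.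
Proof. by case=> <- <-; rewrite tr_id. Qed.

Lemma tr0 p q p' q' : tr p' q' (0 : A p q) = 0.
Proof. by case: (eqVneq (p, q) (p', q')) => [[<- <-]|/eqP ne]; rewrite ?tr_id ?tr_ne. Qed.

Lemma trD p q p' q' (x y : A p q) : tr p' q' (x + y) = tr p' q' x + tr p' q' y.
Proof. by case: (eqVneq (p, q) (p', q')) => [[<- <-]|/eqP ne]; rewrite ?tr_id ?tr_ne ?addr0. Qed.

Lemma trN p q p' q' (x : A p q) : tr p' q' (- x) = - tr p' q' x.
Proof. by case: (eqVneq (p, q) (p', q')) => [[<- <-]|/eqP ne]; rewrite ?tr_id ?tr_ne ?oppr0. Qed.

Lemma trB p q p' q' (x y : A p q) : tr p' q' (x - y) = tr p' q' x - tr p' q' y.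
Proof. by rewrite trD trN. Qed.

Lemma trZ p q p' q' k (x : A p q) : tr p' q' (k *: x) = k *: tr p' q' x.
Proof. by case: (eqVneq (p, q) (p', q')) => [[<- <-]|/eqP ne]; rewrite ?tr_id ?tr_ne ?scaler0. Qed.

Lemma tr_sum p q p' q' (I : Type) (r : seq I) (P : pred I) (F : I -> A p q) :
  tr p' q' (\sum_(i <- r | P i) F i) = \sum_(i <- r | P i) tr p' q' (F i).
Proof.
elim/big_rec2: _ => [|i y1 y2 _ <-]; first by rewrite tr0.
by rewrite trD.
Qed.

End Tr.

Section Mc.
Variables (R : comPzRingType) (n : option nat).

Lemma dmap_tr (A : mcx R n) i p q p' q' (x : A p q) :
  dmap A i p' q' (tr p' q' x) = tr (p' - i%:Z) (q' + 1 - i%:Z) (dmap A i p q x).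
Proof.
case: (eqVneq (p, q) (p', q')) => [[<- <-]|/eqP ne]; first by rewrite !tr_id.
rewrite tr_ne // raddf0 tr_ne //.
by case=> e1 e2; apply: ne; congr pair; lia.
Qed.

Lemma fmap_tr (A B : mcx R n) (f : mcmor R n A B) p q p' q' (x : A p q) :
  f p' q' (tr p' q' x) = tr p' q' (f p q x).
Proof.
case: (eqVneq (p, q) (p', q')) => [[<- <-]|/eqP ne]; first by rewrite !tr_id.
by rewrite !tr_ne // raddf0.
Qed.

End Mc.


Lemma sum_tri (V : zmodType) m (F : nat -> nat -> V) :
  \sum_(l < m.+1) \sum_(j < l.+1) F l j = \sum_(j < m.+1) \sum_(i < (m - j).+1) F (j + i)%N j.
Proof.
elim: m => [|m IH]; first by rewrite !big_ord1.
rewrite big_ord_recr /= IH [in RHS]big_ord_recr /= subnn big_ord1 addn0.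
rewrite [\sum_(j < m.+2) _]big_ord_recr /= addrA; congr (_ + _).
rewrite -big_split; apply: eq_bigr => j _ /=.
have jm : (j <= m)%N := ltn_ord j.
by rewrite (subSn jm) [in RHS]big_ord_recr /= addnS subnKC.
Qed.




Section Fam.
Variables (R : comPzRingType) (n : option nat).

Definition Fam (A : mcx R n) (p q : int) := forall j : nat, A (p - j%:Z) (q - j%:Z).

Definition Dfam (A : mcx R n) (p q : int) (a : Fam A p q) : Fam A p (q + 1) :=
  fun l => \sum_(j < l.+1)
       (-1) ^+ (l - j)%N *:
         tr (p - l%:Z) (q + 1 - l%:Z)
            (dmap A (l - j)%N (p - (j : nat)%:Z) (q - (j : nat)%:Z) (a j)).

Lemma cycrelE (A : mcx R n) s p q (a : Fam A p q) :
  cycrel R n A s p q a <-> (forall l, (l < s)%N -> Dfam a l = 0).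
Proof. by []. Qed.

Lemma Dfam_ext (A : mcx R n) p q (a b : Fam A p q) l :
  (forall j, (j <= l)%N -> a j = b j) -> Dfam a l = Dfam b l.
Proof. by move=> H; apply: eq_bigr => j _; rewrite H // -ltnS. Qed.

Lemma DfamD (A : mcx R n) p q (a b : Fam A p q) l :
  Dfam (fun j => a j + b j) l = Dfam a l + Dfam b l.
Proof. by rewrite /Dfam -big_split; apply: eq_bigr => j _; rewrite raddfD trD scalerDr. Qed.

Lemma DfamN (A : mcx R n) p q (a : Fam A p q) l :
  Dfam (fun j => - a j) l = - Dfam a l.
Proof. by rewrite /Dfam -sumrN; apply: eq_bigr => j _; rewrite raddfN trN scalerN. Qed.

Lemma DfamB (A : mcx R n) p q (a b : Fam A p q) l :
  Dfam (fun j => a j - b j) l = Dfam a l - Dfam b l.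
Proof. by rewrite (DfamD a (fun j => - b j)) DfamN. Qed.

Lemma DfamZ (A : mcx R n) p q (c : R) (a : Fam A p q) l :
  Dfam (fun j => c *: a j) l = c *: Dfam a l.
Proof.
rewrite /Dfam scaler_sumr; apply: eq_bigr => j _.
by rewrite linearZ trZ !scalerA mulrC.
Qed.

Lemma Dfam0 (A : mcx R n) p q l : Dfam (fun j => 0 : A (p - j%:Z) (q - j%:Z)) l = 0.
Proof. by rewrite /Dfam big1 // => j _; rewrite raddf0 tr0 scaler0. Qed.

Lemma fmapZ (A B : mcx R n) (f : mcmor R n A B) p q c (x : A p q) :
  f p q (c *: x) = c *: f p q x.
Proof. exact: (linearZZ (fmap f p q) c). Qed.

Lemma fmapD (A B : mcx R n) (f : mcmor R n A B) p q (x y : A p q) :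
  f p q (x + y) = f p q x + f p q y.
Proof. exact: (raddfD (fmap f p q)). Qed.

Lemma fmapN (A B : mcx R n) (f : mcmor R n A B) p q (x : A p q) :
  f p q (- x) = - f p q x.
Proof. exact: (raddfN (fmap f p q)). Qed.

Lemma fmapB (A B : mcx R n) (f : mcmor R n A B) p q (x y : A p q) :
  f p q (x - y) = f p q x - f p q y.
Proof. by rewrite fmapD fmapN. Qed.

Lemma fmap0 (A B : mcx R n) (f : mcmor R n A B) p q :
  f p q 0 = 0.
Proof. exact: (raddf0 (fmap f p q)). Qed.

Lemma Dfam_f (A B : mcx R n) (f : mcmor R n A B) p q (a : Fam A p q) l :
  f _ _ (Dfam a l) = Dfam (fun j => f _ _ (a j)) l.
Proof.
rewrite /Dfam raddf_sum; apply: eq_bigr => j _.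
have := linearZZ (fmap f (p - l%:Z) (q + 1 - l%:Z)) ((-1) ^+ (l - j)%N). move=> H.
apply: (etrans (H _)). by rewrite fmap_tr fmap_comm.
Qed.

Lemma sign_par (a b k : nat) : a = (b + k * 2)%N -> (-1) ^+ a = (-1) ^+ b :> R.
Proof. by move=> ->; rewrite exprD exprM sqrr_sign mulr1. Qed.

End Fam.


Section DsD.
Variables (R : comPzRingType) (n : option nat) (A : mcx R n).

Lemma DsD p q (a : Fam A p q) m :
  Dfam (fun l => (-1) ^+ l *: Dfam a l) m = 0.
Proof.
pose G (l j : nat) := ((-1) ^+ (m - l) * (-1) ^+ l * (-1) ^+ (l - j)) *:
   tr (p - m%:Z) (q + 1 + 1 - m%:Z)
     (dmap A (m - l) (p - j%:Z - (l - j)%:Z) (q - j%:Z + 1 - (l - j)%:Z)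
        (dmap A (l - j) (p - j%:Z) (q - j%:Z) (a j))).
have E : Dfam (fun l => (-1) ^+ l *: Dfam a l) m =
   \sum_(l < m.+1) \sum_(j < l.+1) G l j.
  apply: eq_bigr => l _.
  rewrite linearZ /= raddf_sum /= trZ tr_sum scaler_sumr scaler_sumr.
  apply: eq_bigr => j _.
  have lm : (l <= m)%N := ltn_ord l.
  have jl : (j <= l)%N := ltn_ord j.
  rewrite [dmap A _ _ _ (_ *: _)]linearZ /= dmap_tr trZ tr_tr2; last by congr pair; lia.
  by rewrite !scalerA /G mulrA.
rewrite E sum_tri.
apply: big1 => j _.
have jm : (j <= m)%N := ltn_ord j.
have := congr1 (tr (p - m%:Z) (q + 1 + 1 - m%:Z)) (@dmap_rel R n A (m - j) (p - j%:Z) (q - j%:Z) (a j)).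
rewrite tr0 tr_sum => H.
rewrite -[RHS](scaler0 _ ((-1) ^+ j)) -[in RHS]H scaler_sumr.
apply: eq_bigr => i _.
have im : (i <= m - j)%N := ltn_ord i.
rewrite /G trZ tr_tr2; last by congr pair; lia.
rewrite addKn subnDA scalerA; congr (_ *: _).
rewrite -!exprD; apply: sign_par (i) _; lia.
Qed.

End DsD.


Section Shift.
Variables (R : comPzRingType) (n : option nat) (A : mcx R n).

Definition shift (P Q : int) m (P' Q' : int) (v : Fam A P Q) : Fam A P' Q' :=
  fun j => tr (P' - j%:Z) (Q' - j%:Z) (v (j + m)%N).

Definition pad (P' Q' : int) m (P Q : int) (e : Fam A P' Q') : Fam A P Q :=
  fun j => if (m <= j)%N then tr (P - j%:Z) (Q - j%:Z) (e (j - m)%N) else 0.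

Lemma DfamE P Q (v : Fam A P Q) l :
  Dfam v l = \sum_(0 <= j < l.+1)
       (-1) ^+ (l - j)%N *:
         tr (P - l%:Z) (Q + 1 - l%:Z)
            (dmap A (l - j)%N (P - j%:Z) (Q - j%:Z) (v j)).
Proof. by rewrite big_mkord. Qed.

Lemma Dfam_shift P Q m P' Q' (v : Fam A P Q) l :
  P' = P - m%:Z -> Q' = Q - m%:Z -> (forall j, (j < m)%N -> v j = 0) ->
  Dfam (shift m P' Q' v) l = tr (P' - l%:Z) (Q' + 1 - l%:Z) (Dfam v (l + m)%N).
Proof.
move=> -> -> v0.
rewrite !DfamE tr_sum [in RHS](big_cat_nat (n := m)) //=; last by lia.
rewrite [X in _ = X + _]big1_seq ?add0r; last first.
  move=> j /andP[_]; rewrite mem_index_iota => /andP[_ jm].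
  by rewrite v0 // raddf0 tr0 scaler0 tr0.
rewrite (big_addn 0 _ m) -addSn addnK.
apply: eq_big_nat => j /andP[_ jl].
rewrite /shift dmap_tr tr_tr1; last by congr pair; lia.
rewrite trZ tr_tr1; last by congr pair; lia.
by rewrite subnDr.
Qed.

Lemma Dfam_pad P' Q' m P Q (e : Fam A P' Q') l :
  P' = P - m%:Z -> Q' = Q - m%:Z ->
  Dfam (pad m P Q e) l =
    if (m <= l)%N then tr (P - l%:Z) (Q + 1 - l%:Z) (Dfam e (l - m)%N) else 0.
Proof.
move=> eP eQ.
case: leqP => ml; last first.
  apply: big1 => j _; rewrite /pad.
  have jl : (j <= l)%N := ltn_ord j.
  have -> : (m <= j)%N = false by apply/negbTE; rewrite -ltnNge; apply: leq_ltn_trans ml.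
  by rewrite raddf0 tr0 scaler0.
rewrite !DfamE tr_sum [in LHS](big_cat_nat (n := m)) //=; last by lia.
rewrite [X in X + _ = _]big1_seq ?add0r; last first.
  move=> j /andP[_]; rewrite mem_index_iota => /andP[_ jm].
  by rewrite /pad leqNgt jm /= raddf0 tr0 scaler0.
rewrite (big_addn 0 _ m) (subSn ml).
apply: eq_big_nat => j /andP[_ jl].
rewrite /pad leq_addl addnK dmap_tr tr_tr1; last by congr pair; lia.
rewrite trZ tr_tr1; last by congr pair; lia.
by rewrite -subnDA addnC.
Qed.

End Shift.


Lemma tr_zero (R : comPzRingType) (A : int -> int -> lmodType R) p q X Y (x : A p q) :
  (p, q) = (X, Y) -> tr X Y x = 0 -> x = 0.
Proof. by case=> <- <-; rewrite tr_id. Qed.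

Section BrS.
Variables (R : comPzRingType) (n : option nat) (A : mcx R n).

Lemma BrSumE P Q (b : Fam A P Q) l X Y :
  \sum_(i < l.+1) (-1) ^+ (i : nat) *: tr X Y (dmap A i _ _ (b (l - i)%N)) =
  tr X Y (Dfam b l).
Proof.
rewrite /Dfam tr_sum [RHS](reindex_inj rev_ord_inj) /=.
apply: eq_bigr => i _.
have il : (i <= l)%N := ltn_ord i.
rewrite subSS trZ tr_tr1; last by congr pair; lia.
by rewrite subKn.
Qed.

Lemma BrSumE' P Q (b : Fam A P Q) l X Y :
  \sum_(i < l.+1) (-1) ^+ (i : nat) *: tr X Y (dmap A i _ _ (b (l.+1 - 1 - i)%N)) =
  tr X Y (Dfam b l).
Proof.
rewrite -BrSumE; apply: eq_bigr => i _.
by rewrite subSS subn0.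
Qed.

End BrS.


Section Main.
Variables (R : comPzRingType) (n : option nat) (A B : mcx R n) (f : mcmor R n A B).

Definition Lk k := forall p q (y : Fam B p q), (forall l, (l < k)%N -> Dfam y l = 0) ->
  exists x : Fam A p q, (forall l, (l < k)%N -> Dfam x l = 0) /\ forall j, f _ _ (x j) = y j.

Lemma lift0 (ES : E_surj R n A B f 0) p q (y : B p q) : exists x : A p q, f p q x == y.
Proof.
have Zy : Zr R n B 0 p q y.
  exists (fun j : nat => tr (p - j%:Z) (q - j%:Z) y); split => //.
  by rewrite tr_tr1 ?tr_id //; congr pair; lia.
case: (ES p q y Zy) => x [_ [b [Hb _]]].
by exists x; rewrite -subr_eq0 Hb big_ord0.
Qed.

Lemma L0 (ES : E_surj R n A B f 0) : Lk 0.
Proof.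
move=> p q y _.
exists (fun j => xchoose (lift0 ES _ _ (y j))); split => // j.
exact/eqP/(xchooseP (lift0 ES _ _ (y j))).
Qed.


Lemma Lsurj k (ES : E_surj R n A B f k.+1) : Lk k -> Lk k.+1.
Proof.
move=> IH p q y Hy.
have Zy : Zr R n B k.+1 p q (tr p q (y 0%N)) by exists y; split.
case: (ES p q _ Zy) => x0 [[a [Ha Hax]] [b [Hb1 Hb2]]].
pose bF : Fam B (p + (k.+1)%:Z - 1) (q + (k.+1)%:Z - 2) := b.
have HbF : forall l, (l < k)%N -> Dfam bF l = 0.
  move=> l lk; have := Hb2 l lk; rewrite BrSumE; apply: tr_zero.
  by congr pair; lia.
rewrite BrSumE' in Hb1.
case: (IH _ _ bF HbF) => b' [Hb' fb'].
pose w : Fam A p q := shift k p q (fun j => ((-1) ^+ k * (-1) ^+ j) *: Dfam b' j).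
have Dw : forall l, Dfam w l = 0.
  move=> l; rewrite Dfam_shift; first last.
  - by move=> j jk; rewrite Hb' // scaler0.
  - by lia.
  - by lia.
  rewrite (Dfam_ext _ (fun j => (-1) ^+ k *: ((-1) ^+ j *: Dfam b' j))); last first.
    by move=> j _; rewrite scalerA.
  by rewrite DfamZ DsD scaler0 tr0.
pose x' : Fam A p q := fun j => a j - w j.
have Dx' : forall l, (l < k.+1)%N -> Dfam x' l = 0.
  by move=> l lk; rewrite DfamB Dw (Ha l lk : Dfam a l = 0) subr0.
have fx'0 : f _ _ (x' 0%N) = y 0%N.
  have E1 := congr1 (tr (p - 0%:Z) (q - 0%:Z)) Hb1.
  rewrite trB -Hax fmap_tr !tr_tr1 ?tr_id in E1; try (by congr pair; lia).
  rewrite /x' /w /shift fmapB fmap_tr fmapZ Dfam_f /= -expr2 sqrr_sign scale1r.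
  rewrite (Dfam_ext _ bF); last by move=> j _; rewrite fb'.
  by rewrite -E1 opprB [LHS]addrC subrK.
pose z : Fam B p q := fun j => y j - f _ _ (x' j).
pose z1 : Fam B (p - 1) (q - 1) := shift 1 (p - 1) (q - 1) z.
have Dz1 : forall l, (l < k)%N -> Dfam z1 l = 0.
  move=> l lk; rewrite Dfam_shift; first last.
  - by case=> // _; rewrite /z fx'0 subrr.
  - by lia.
  - by lia.
  rewrite DfamB -Dfam_f Hy ?Dx' ?fmap0 ?subrr ?tr0 //; lia.
case: (IH _ _ z1 Dz1) => z' [Hz' fz'].
exists (fun j => x' j + pad 1 p q z' j); split.
  move=> l lk; rewrite DfamD Dx' // add0r Dfam_pad; first last.
  - by lia.
  - by lia.
  case: ifP => // l1; rewrite Hz' ?tr0 //; lia.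
case=> [|j]; first by rewrite fmapD /pad /= fmap0 addr0.
rewrite fmapD /pad /= subn1 /= fmap_tr fz' /z1 /shift tr_tr1; last by congr pair; lia.
rewrite addn1 tr_id /z.
by rewrite [LHS]addrC subrK.
Qed.


Lemma Linj k r (EI : E_inj R n A B f r.+1) (rk : (r < k)%N) : Lk k -> Lk r.+1 -> Lk k.+1.
Proof.
move=> IH IHr p q y Hy.
case: (IH _ _ y (fun l lk => Hy l (leqW lk))) => x [Hx fx].
have fc0 : f _ _ (Dfam x k) = 0.
  by rewrite Dfam_f (Dfam_ext _ y) ?Hy // => j _; exact: fx.
pose C : Fam A (p - k%:Z) (q + 1 - k%:Z) :=
  shift k (p - k%:Z) (q + 1 - k%:Z) (fun j => ((-1) ^+ k * (-1) ^+ j) *: Dfam x j).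
have Zc : Zr R n A r.+1 (p - k%:Z) (q + 1 - k%:Z) (Dfam x k).
  exists C; split.
    move=> l _; change (Dfam C l = 0).
    rewrite Dfam_shift; first last.
    - by move=> j jk; rewrite Hx // scaler0.
    - by lia.
    - by lia.
    rewrite (Dfam_ext _ (fun j => (-1) ^+ k *: ((-1) ^+ j *: Dfam x j))); last first.
      by move=> j _; rewrite scalerA.
    by rewrite DfamZ DsD scaler0 tr0.
  rewrite /C /shift tr_tr1; last by congr pair; lia.
  by rewrite /= -expr2 sqrr_sign scale1r tr_id.
have Bfc : Br R n B r.+1 (p - k%:Z) (q + 1 - k%:Z) (f _ _ (Dfam x k)).
  exists (fun _ => 0); split.
    by rewrite fc0; symmetry; apply: big1 => i _; rewrite raddf0 tr0 scaler0.
  by move=> l _; apply: big1 => i _; rewrite raddf0 tr0 scaler0.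
case: (EI _ _ _ Zc Bfc) => b [Hb1 Hb2].
pose bF : Fam A (p - k%:Z + (r.+1)%:Z - 1) (q + 1 - k%:Z + (r.+1)%:Z - 2) := b.
have HbF : forall l, (l < r)%N -> Dfam bF l = 0.
  move=> l lk; have := Hb2 l lk; rewrite BrSumE; apply: tr_zero.
  by congr pair; lia.
rewrite BrSumE' in Hb1.
have Hfb : forall l, (l < r.+1)%N -> Dfam (fun j => f _ _ (bF j)) l = 0.
  move=> l; rewrite ltnS leq_eqVlt => /orP [/eqP -> | lr]; last by rewrite -Dfam_f HbF ?fmap0.
  rewrite -Dfam_f.
  have <- : tr (p - k%:Z + (r.+1)%:Z - 1 - r%:Z) (q + 1 - k%:Z + (r.+1)%:Z - 2 + 1 - r%:Z) (Dfam x k)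
     = Dfam bF r.
    by rewrite Hb1 tr_tr1 ?tr_id //; congr pair; lia.
  by rewrite fmap_tr fc0 tr0.
case: (IHr _ _ _ Hfb) => b'' [Hb'' fb''].
pose e : Fam A _ _ := fun j => bF j - b'' j.
pose u : Fam A p q := pad (k - r) p q e.
exists (fun j => x j - u j); split.
  move=> l lk; rewrite DfamB Dfam_pad; first last.
  - by lia.
  - by lia.
  rewrite DfamB.
  move: lk; rewrite ltnS leq_eqVlt => /orP [/eqP -> | lk].
    rewrite leq_subr subKn ?(ltnW rk) // Hb'' // subr0 -Hb1.
    by rewrite subrr.
  rewrite Hx //; case: ifP => kl; last by rewrite subrr.
  by rewrite HbF ?Hb'' ?subrr ?tr0 ?subrr //; lia.
move=> j; rewrite fmapB fx /u /pad; case: ifP => _; last by rewrite fmap0 subr0.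
by rewrite fmap_tr /e fmapB fb'' subrr tr0 subr0.
Qed.

End Main.


Theorem mainTheorem18 (R : comPzRingType) (n : option nat)
    (hn : if n is Some m then (2 <= m)%N else true)
    (A B : mcx R n) (f : mcmor R n A B) (r s : nat) (p q : int) :
  Er_qiso R n A B f r -> r_fibration R n A B f r ->
  forall g : forall j : nat, B (p - j%:Z) (q - j%:Z),
    ZW_hom R n B s p q g ->
    exists h : forall j : nat, A (p - j%:Z) (q - j%:Z),
      ZW_hom R n A s p q h /\ lifts R n A B f s p q h g.
Proof.
move=> [EI ES] Hf g Hg.
have ES0 : E_surj R n A B f 0 := Hf 0%N (leq0n r).
have Lall : forall k, Lk f k.
  suff H : forall k k', (k' <= k)%N -> Lk f k' by move=> k; apply: (H k).
  elim=> [|k IHk] k'.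
    by rewrite leqn0 => /eqP ->; exact: L0 ES0.
  rewrite leq_eqVlt => /orP [/eqP -> | hk']; last exact: IHk.
  case: (leqP k r) => kr.
    apply: Lsurj (IHk k (leqnn k)).
    case: (ltnP k r) => kr'; first exact: Hf.
    have -> : k = r by apply/eqP; rewrite eqn_leq kr kr'.
    exact: ES.
  exact: (Linj EI kr (IHk k (leqnn k)) (IHk r.+1 kr)).
case: (Lall s p q g Hg) => h [Hh fh].
by exists h; split => // j _; exact: fh.
Qed.
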